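(* Let $r,q$ be positive integers, and let $k\ge 1$, $p_1,\dots,p_k\ge 1$ be integers with $\frac{r}{q}=\frac{k-1}{\sum_{i=1}^k p_i}$. Let $s_i$ ($1\le i\le k$), $a_{ij}$ ($1\le i\le k$, $1\le j\le p_i$) and $\nu$ be integers, with all $a_{ij}>0$. Then the identity $$\left\lceil \frac{rn}{q}\right\rceil=\sum_{i=1}^k \left\lceil \frac{r\left(n-s_i-\sum_{j=1}^{p_i}\left\lceil \frac{r(n-a_{ij})}{q}\right\rceil\right)}{q}\right\rceil+\nu$$ holds for all positive integers $n$ if and only if it holds for all integers $n$ with $0<n\le q^2$.
   Context: This identity expresses that the sequence $B(n)=\lceil rn/q\rceil$ (defined for all integers $n$) formally satisfies the nested recursion $R(n)=\sum_{i=1}^k R\big(n-s_i-\sum_{j=1}^{p_i}R(n-a_{ij})\big)+\nu$, i.e. substituting $B$ for $R$ on both sides gives an equality (no claim is made that the recursion generates $B$ from initial conditions). *)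

(* Defs.v *)
From mathcomp Require Import all_boot all_order all_algebra.
Unset Printing Implicit Defensive.
Import Order.TTheory GRing.Theory Num.Theory.
Local Open Scope ring_scope.

Definition B (r q : nat) (x : int) : int :=
  Num.ceil ((r%:R * x%:~R) / q%:R : rat).

Definition nested_identity (r q k : nat) (p : 'I_k -> nat) (s : 'I_k -> int)
    (a : forall i : 'I_k, 'I_(p i) -> int) (nu : int) (n : int) : Prop :=
  B r q n = \sum_(i < k) B r q (n - s i - \sum_(j < p i) B r q (n - a i j)) + nu.

(* Main.v *)
Require Import Defs.
From mathcomp Require Import all_boot all_order all_algebra.
From mathcomp Require Import zify ring.
Import Order.TTheory GRing.Theory Num.Theory.
Local Open Scope ring_scope.

Lemma Bshift (r q : nat) (x m : int) : (0 < q)%N ->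
  B r q (x + q%:Z * m) = B r q x + r%:Z * m.
Proof.
move=> q0; rewrite /B.
have qn : (q%:R : rat) != 0 by rewrite pnatr_eq0 -lt0n.
have -> : (r%:R * (x + q%:Z * m)%:~R / q%:R : rat)
   = r%:R * x%:~R / q%:R + ((r%:Z * m)%:~R : rat).
  rewrite !intrD !intrM /=. rewrite -!pmulrn. field. exact: qn.
by rewrite ceilDrz ?intrKceil // intr_int.
Qed.

Lemma period (r q k : nat) (p : 'I_k -> nat) (s : 'I_k -> int)
    (a : forall i : 'I_k, 'I_(p i) -> int) (nu : int) (n : int) :
  (0 < q)%N -> (r * (\sum_(i < k) p i) = (k - 1) * q)%N -> (1 <= k)%N ->
  nested_identity r q k p s a nu n <-> nested_identity r q k p s a nu (n + q%:Z * q%:Z).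
Proof.
move=> q0 hS k1; rewrite /nested_identity Bshift //.
have -> : \sum_(i < k) B r q (n + q%:Z * q%:Z - s i - \sum_(j < p i) B r q (n + q%:Z * q%:Z - a i j))
  = \sum_(i < k) B r q (n - s i - \sum_(j < p i) B r q (n - a i j)) + \sum_(i < k) r%:Z * (q%:Z - (p i)%:Z * r%:Z).
  rewrite -big_split /=; apply: eq_bigr => i _.
  rewrite -Bshift //; congr B.
  have -> : \sum_(j < p i) B r q (n + q%:Z * q%:Z - a i j) = \sum_(j < p i) B r q (n - a i j) + (p i)%:Z * (r%:Z * q%:Z).
    rewrite (eq_bigr (fun j => B r q (n - a i j) + r%:Z * q%:Z)); last first.
      by move=> j _; rewrite -Bshift // addrAC.
    by rewrite big_split /= sumr_const card_ord -mulr_natl natz.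
  ring.
have -> : \sum_(i < k) r%:Z * (q%:Z - (p i)%:Z * r%:Z) = r%:Z * q%:Z.
  have hs : \sum_(i < k) (p i)%:Z = (\sum_(i < k) p i)%:Z.
    by rewrite -natz natr_sum; apply: eq_bigr => i _; rewrite natz.
  rewrite -mulr_sumr sumrB sumr_const card_ord -mulr_suml hs -mulr_natl natz.
  have : ((r * (\sum_(i < k) p i))%:R = ((k - 1) * q)%:R :> int) by rewrite hS.
  rewrite !natrM natrB // !natz. move=> h.
  by rewrite [X in _ - X]mulrC h; ring.
split; first by move=> ->; ring.
by move=> h; apply: (addIr (r%:Z * q%:Z)); rewrite h; ring.
Qed.

Theorem theorem1 (r q k : nat) (p : 'I_k -> nat) (s : 'I_k -> int)
    (a : forall i : 'I_k, 'I_(p i) -> int) (nu : int) :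
  (0 < r)%N -> (0 < q)%N -> (1 <= k)%N ->
  (forall i, 1 <= p i)%N ->
  (r%:R / q%:R : rat) = (k - 1)%:R / (\sum_(i < k) p i)%:R ->
  (forall i j, 0 < a i j) ->
  (forall n : int, 0 < n -> nested_identity r q k p s a nu n) <->
  (forall n : int, 0 < n <= (q ^ 2)%:Z -> nested_identity r q k p s a nu n).
Proof.
move=> r0 q0 k1 p1 hr _.
have hS : (r * (\sum_(i < k) p i) = (k - 1) * q)%N.
  have qn : (q%:R : rat) != 0 by rewrite pnatr_eq0 -lt0n.
  case: (posnP (\sum_(i < k) p i)) => S0.
    move: hr; rewrite S0 invr0 mulr0 => /eqP.
    rewrite mulf_eq0 invr_eq0 (negbTE qn) orbF pnatr_eq0.
    by move/eqP => r00; move: r0; rewrite r00.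
  have Sn : ((\sum_(i < k) p i)%:R : rat) != 0 by rewrite pnatr_eq0 -lt0n.
  move/eqP: hr; rewrite eqr_div // -!natrM eqr_nat => /eqP ->.
  by rewrite mulnC.
split; first by move=> H n /andP[] /H.
move=> H [N|N] //; elim/ltn_ind: N => N IH N0.
case: (leqP N (q ^ 2)) => hN.
  by apply: H; rewrite N0 /= lez_nat.
have -> : Posz N = Posz (N - q ^ 2) + q%:Z * q%:Z.
  by rewrite -PoszM -PoszD mulnn subnK // ltnW.
apply: (proj1 (@period r q k p s a nu (Posz (N - q ^ 2)) q0 hS k1)); apply: IH; rewrite ?ltz_nat; lia.
Qed.
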